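(* Let $G$ be a right $\ell$-group with a strong order unit $s$, and let $g \in G^-$. Put $k = \min\{ i \geq 0 : g \geq s^{-i}\}$. Then $g$ has a unique left-normal factorization $g = h_1 h_2 \cdots h_k$. Its factors are \[ h_i = (g \curlyvee s^{-(i-1)})^{-1}(g \curlyvee s^{-i}) \qquad (1 \leq i \leq k), \] where $a \curlyvee b := (a^{-1} \wedge b^{-1})^{-1}$.
   Context: A right $\ell$-group is a group $G$ (identity $e$) with a partial order $\leq$ that is right-invariant ($x \leq y \Rightarrow xz \leq yz$) and under which $G$ is a lattice with meet $\wedge$ and join $\vee$. $G^- := \{g \in G : g \leq e\}$, and $[a,b] := \{x : a \leq x \leq b\}$. An element $s$ is normal if $x \mapsto sx$ is a lattice automorphism of $G$. It is a strong order unit if $s > e$, $s$ is normal, and every $g \in G$ satisfies $g \leq s^k$ for some $k \in \mathbb{Z}$. For $g \in G^-$, a left-normal factorization of $g$ is a finite sequence $h_1,\dots,h_k \in [s^{-1},e]$ satisfying three conditions: (1) $g = h_1 \cdots h_{k-1} h_k$; (2) $h_i \neq e$ for all $i$; (3) for each $1 \leq i < k$ there do not exist $h,h' \in G^-$ with $h \neq e$, $hh' = h_{i+1}$ and $h_i h \in [s^{-1},e]$. *)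

(* Defs.v *)
From Stdlib Require Import ZArith List Arith.
Import ListNotations.
Set Implicit Arguments.

Record right_lgroup := RightLGroup {
  car :> Type;
  gmul : car -> car -> car;
  ginv : car -> car;
  gone : car;
  gle : car -> car -> Prop;
  gmeet : car -> car -> car;
  gjoin : car -> car -> car;
  gmulA : forall x y z, gmul x (gmul y z) = gmul (gmul x y) z;
  gmul1l : forall x, gmul gone x = x;
  gmul1r : forall x, gmul x gone = x;
  gmulVl : forall x, gmul (ginv x) x = gone;
  gmulVr : forall x, gmul x (ginv x) = gone;
  gle_refl : forall x, gle x x;
  gle_antisym : forall x y, gle x y -> gle y x -> x = y;
  gle_trans : forall x y z, gle x y -> gle y z -> gle x z;
  gle_mulr : forall x y z, gle x y -> gle (gmul x z) (gmul y z);
  gmeet_l : forall x y, gle (gmeet x y) x;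
  gmeet_r : forall x y, gle (gmeet x y) y;
  gmeet_glb : forall x y z, gle z x -> gle z y -> gle z (gmeet x y);
  gjoin_l : forall x y, gle x (gjoin x y);
  gjoin_r : forall x y, gle y (gjoin x y);
  gjoin_lub : forall x y z, gle x z -> gle y z -> gle (gjoin x y) z
}.

Arguments gmul {r}.
Arguments ginv {r}.
Arguments gle {r}.
Arguments gmeet {r}.
Arguments gjoin {r}.
Arguments gone r : assert.

Section Defs.
Context {G : right_lgroup}.

Definition npow (x : G) (n : nat) : G := Nat.iter n (@gmul G x) (gone G).
Definition zpow (x : G) (z : Z) : G :=
  match z with
  | Z0 => gone G
  | Zpos p => npow x (Pos.to_nat p)
  | Zneg p => ginv (npow x (Pos.to_nat p))
  end.

Definition negcone (g : G) : Prop := gle g (gone G).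
Definition interval (a b x : G) : Prop := gle a x /\ gle x b.

Definition bijective (f : G -> G) : Prop :=
  exists f' : G -> G, (forall x, f' (f x) = x) /\ (forall y, f (f' y) = y).

Definition lattice_automorphism (f : G -> G) : Prop :=
  bijective f /\
  (forall x y, f (gmeet x y) = gmeet (f x) (f y)) /\
  (forall x y, f (gjoin x y) = gjoin (f x) (f y)).

Definition normal (s : G) : Prop := lattice_automorphism (fun x => @gmul G s x).

Definition strong_order_unit (s : G) : Prop :=
  gle (gone G) s /\ s <> gone G /\ normal s /\
  forall g : G, exists k : Z, gle g (zpow s k).

Definition curlyvee (a b : G) : G := ginv (gmeet (ginv a) (ginv b)).

Definition prodl (hs : list G) : G := fold_right (@gmul G) (gone G) hs.

(* left-normal factorization of g with respect to s; factors are
   hs = [h_1; ...; h_k], with h_i = nth (i-1) hs. *)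
Definition left_normal_factorization (s g : G) (hs : list G) : Prop :=
  (forall h, In h hs -> interval (ginv s) (gone G) h) /\
  g = prodl hs /\
  (forall h, In h hs -> h <> gone G) /\
  (forall i, S i < length hs ->
     ~ exists h h' : G, negcone h /\ negcone h' /\ h <> gone G /\
         gmul h h' = nth (S i) hs (gone G) /\
         interval (ginv s) (gone G) (gmul (nth i hs (gone G)) h)).

End Defs.

(* Main.v *)
Require Import Defs.
From Stdlib Require Import ZArith List Arith Lia Classical Wf_nat.
Import ListNotations.
Local Notation "x · y" := (gmul x y) (at level 40, left associativity).


Lemma mulKV {G : right_lgroup} (x y : G) : ginv x · (x · y) = y.
Proof. rewrite gmulA, gmulVl, gmul1l; reflexivity. Qed.
Lemma mulVK {G : right_lgroup} (x y : G) : x · (ginv x · y) = y.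
Proof. rewrite gmulA, gmulVr, gmul1l; reflexivity. Qed.
Lemma mulK {G : right_lgroup} (x y : G) : y · x · ginv x = y.
Proof. rewrite <- gmulA, gmulVr, gmul1r; reflexivity. Qed.
Lemma mulKr {G : right_lgroup} (x y : G) : y · ginv x · x = y.
Proof. rewrite <- gmulA, gmulVl, gmul1r; reflexivity. Qed.
Lemma mul_cancel_l {G : right_lgroup} (x y z : G) : x · y = x · z -> y = z.
Proof. intro H. rewrite <- (mulKV x y), H, mulKV. reflexivity. Qed.
Lemma inv_uniq {G : right_lgroup} (x y : G) : x · y = gone G -> y = ginv x.
Proof. intro H. apply (mul_cancel_l x). rewrite H, gmulVr. reflexivity. Qed.
Lemma inv_inv {G : right_lgroup} (x : G) : ginv (ginv x) = x.
Proof. symmetry. apply inv_uniq. apply gmulVl. Qed.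
Lemma inv_mul {G : right_lgroup} (x y : G) : ginv (x · y) = ginv y · ginv x.
Proof. symmetry. apply inv_uniq. rewrite <- gmulA, (gmulA _ y), gmulVr, gmul1l, gmulVr. reflexivity. Qed.
Lemma inv_one {G : right_lgroup} : ginv (gone G) = gone G.
Proof. symmetry. apply inv_uniq. apply gmul1l. Qed.
Lemma inv_inj {G : right_lgroup} (x y : G) : ginv x = ginv y -> x = y.
Proof. intro H. rewrite <- (inv_inv x), H, inv_inv. reflexivity. Qed.

Lemma le_mulr_iff {G : right_lgroup} (x y z : G) : gle x y <-> gle (x · z) (y · z).
Proof.
  split; intro H. apply gle_mulr; exact H.
  rewrite <- (mulK z x), <- (mulK z y). apply gle_mulr; exact H.
Qed.

Definition lle {G : right_lgroup} (x y : G) := gle (ginv y · x) (gone G).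

Lemma lle_iff {G : right_lgroup} (x y : G) : lle x y <-> gle (ginv y) (ginv x).
Proof.
  unfold lle. rewrite (le_mulr_iff _ _ (ginv x)), mulK, gmul1l. reflexivity.
Qed.
Lemma lle_refl {G : right_lgroup} (x : G) : lle x x.
Proof. apply lle_iff, gle_refl. Qed.
Lemma lle_trans {G : right_lgroup} (x y z : G) : lle x y -> lle y z -> lle x z.
Proof. rewrite !lle_iff. intros; eapply gle_trans; eauto. Qed.
Lemma lle_antisym {G : right_lgroup} (x y : G) : lle x y -> lle y x -> x = y.
Proof. rewrite !lle_iff. intros; apply inv_inj, gle_antisym; auto. Qed.
Lemma lle_mull {G : right_lgroup} (x y z : G) : lle x y <-> lle (z · x) (z · y).
Proof. unfold lle. rewrite inv_mul, <- gmulA, mulKV. reflexivity. Qed.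
Lemma lle_e_r {G : right_lgroup} (x : G) : lle x (gone G) <-> gle x (gone G).
Proof. unfold lle. rewrite inv_one, gmul1l. reflexivity. Qed.
Lemma lle_e_l {G : right_lgroup} (x : G) : lle (gone G) x <-> gle (gone G) x.
Proof. unfold lle. rewrite gmul1r, (le_mulr_iff _ _ x), gmulVl, gmul1l. reflexivity. Qed.

Lemma vee_l {G : right_lgroup} (a b : G) : lle a (curlyvee a b).
Proof. apply lle_iff. unfold curlyvee. rewrite inv_inv. apply gmeet_l. Qed.
Lemma vee_r {G : right_lgroup} (a b : G) : lle b (curlyvee a b).
Proof. apply lle_iff. unfold curlyvee. rewrite inv_inv. apply gmeet_r. Qed.
Lemma vee_lub {G : right_lgroup} (a b c : G) : lle a c -> lle b c -> lle (curlyvee a b) c.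
Proof. rewrite !lle_iff. unfold curlyvee. rewrite inv_inv. apply gmeet_glb. Qed.
Lemma vee_eq_l {G : right_lgroup} (a b : G) : lle b a -> curlyvee a b = a.
Proof. intro H. apply lle_antisym. apply vee_lub; auto using lle_refl. apply vee_l. Qed.
Lemma vee_eq_r {G : right_lgroup} (a b : G) : lle a b -> curlyvee a b = b.
Proof. intro H. apply lle_antisym. apply vee_lub; auto using lle_refl. apply vee_r. Qed.
Lemma vee_mono {G : right_lgroup} (a b b' : G) : lle b b' -> lle (curlyvee a b) (curlyvee a b').
Proof. intro H. apply vee_lub. apply vee_l. eapply lle_trans; eauto. apply vee_r. Qed.
Lemma vee_absorb {G : right_lgroup} (a b c : G) : lle b a -> curlyvee a (curlyvee b c) = curlyvee a c.
Proof.
  intro H. apply lle_antisym.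
  - apply vee_lub. apply vee_l. apply vee_lub. eapply lle_trans; eauto. apply vee_l. apply vee_r.
  - apply vee_lub. apply vee_l. eapply lle_trans; [|apply vee_r]. apply vee_r.
Qed.

Lemma vee_morph {G : right_lgroup} (f g : G -> G) :
  (forall x, g (f x) = x) -> (forall x, f (g x) = x) ->
  (forall x y, lle x y <-> lle (f x) (f y)) ->
  forall a b, f (curlyvee a b) = curlyvee (f a) (f b).
Proof.
  intros Hgf Hfg Hf a b. apply lle_antisym.
  - rewrite <- (Hfg (curlyvee (f a) (f b))). apply (proj1 (Hf _ _)). apply vee_lub.
    + apply (proj2 (Hf _ _)). rewrite Hfg. apply vee_l.
    + apply (proj2 (Hf _ _)). rewrite Hfg. apply vee_r.
  - apply vee_lub; apply (proj1 (Hf _ _)). apply vee_l. apply vee_r.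
Qed.

Lemma vee_mull {G : right_lgroup} (z a b : G) : z · curlyvee a b = curlyvee (z · a) (z · b).
Proof.
  apply (vee_morph (fun x => z · x) (fun x => ginv z · x)).
  intros; apply mulKV. intros; apply mulVK. intros; apply lle_mull.
Qed.

Lemma prodl_neg {G : right_lgroup} (L : list G) :
  (forall x, In x L -> gle x (gone G)) -> gle (prodl L) (gone G).
Proof.
  induction L as [|h L IH]; intro H; simpl. apply gle_refl.
  eapply gle_trans. apply gle_mulr. apply H; left; reflexivity.
  rewrite gmul1l. apply IH. intros; apply H; right; assumption.
Qed.

Lemma meet_eq {G : right_lgroup} (x y : G) : gle x y -> gmeet x y = x.
Proof. intro H. apply gle_antisym. apply gmeet_l. apply gmeet_glb; auto using gle_refl. Qed.

Lemma normal_le {G : right_lgroup} (s x y : G) : normal s -> (gle x y <-> gle (s · x) (s · y)).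
Proof.
  intros [_ [Hm _]]. split; intro H.
  - rewrite <- (meet_eq _ _ H), Hm. apply gmeet_r.
  - pose proof (meet_eq _ _ H) as E. rewrite <- Hm in E.
    apply mul_cancel_l in E. rewrite <- E. apply gmeet_r.
Qed.

Lemma t_le {G : right_lgroup} (s x y : G) : normal s -> (gle x y <-> gle (ginv s · x) (ginv s · y)).
Proof.
  intro Hs. rewrite (normal_le s (ginv s · x) (ginv s · y) Hs), !mulVK. reflexivity.
Qed.

Lemma lle_mulr_t {G : right_lgroup} (s x y : G) : normal s ->
  (lle x y <-> lle (x · ginv s) (y · ginv s)).
Proof.
  intro Hs. unfold lle. rewrite inv_mul, inv_inv.
  replace (s · ginv y · (x · ginv s)) with (s · (ginv y · x) · ginv s)
    by (rewrite !gmulA; reflexivity).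
  rewrite (le_mulr_iff (s · (ginv y · x) · ginv s) _ s), mulKr, gmul1l.
  rewrite <- (gmul1r _ s) at 2. rewrite <- normal_le by exact Hs. reflexivity.
Qed.

Lemma vee_mulr_t {G : right_lgroup} (s a b : G) : normal s ->
  curlyvee a b · ginv s = curlyvee (a · ginv s) (b · ginv s).
Proof.
  intro Hs.
  apply (vee_morph (fun x => x · ginv s) (fun x => x · s)).
  intros; simpl. rewrite <- gmulA, gmulVl, gmul1r; reflexivity.
  intros; simpl. apply mulK.
  intros; apply lle_mulr_t; exact Hs.
Qed.

Lemma npow_S {G : right_lgroup} (x : G) n : npow x (S n) = x · npow x n.
Proof. reflexivity. Qed.
Lemma npow_S_r {G : right_lgroup} (x : G) n : npow x (S n) = npow x n · x.
Proof.
  induction n. simpl. rewrite gmul1r, gmul1l. reflexivity.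
  change (npow x (S (S n))) with (x · npow x (S n)). rewrite IHn at 1. rewrite gmulA. reflexivity.
Qed.

Lemma vee_mulr_tpow {G : right_lgroup} (s a b : G) n : normal s ->
  curlyvee a b · npow (ginv s) n = curlyvee (a · npow (ginv s) n) (b · npow (ginv s) n).
Proof.
  intro Hs. induction n. simpl. rewrite !gmul1r. reflexivity.
  rewrite npow_S_r, !gmulA, IHn, vee_mulr_t by exact Hs. reflexivity.
Qed.

Lemma tpow_le {G : right_lgroup} (s x y : G) n : normal s ->
  (gle x y <-> gle (npow (ginv s) n · x) (npow (ginv s) n · y)).
Proof.
  intro Hs. induction n. simpl. rewrite !gmul1l. reflexivity.
  rewrite npow_S, <- !gmulA, <- t_le by exact Hs. exact IHn.
Qed.

Lemma tpow_le_lle {G : right_lgroup} (s x : G) n : normal s ->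
  (gle (npow (ginv s) n) x <-> lle (npow (ginv s) n) x).
Proof.
  intro Hs. set (T := npow (ginv s) n). unfold lle.
  rewrite (le_mulr_iff _ _ (ginv x)), gmulVr.
  rewrite (le_mulr_iff _ _ T), gmul1l.
  rewrite (tpow_le s (ginv x · T) (gone G) n Hs). fold T. rewrite gmul1r, gmulA.
  reflexivity.
Qed.

Lemma inv_npow {G : right_lgroup} (s : G) n : ginv (npow s n) = npow (ginv s) n.
Proof.
  induction n. simpl. apply inv_one.
  rewrite npow_S, inv_mul, IHn, npow_S_r. reflexivity.
Qed.

Lemma zpow_neg {G : right_lgroup} (s : G) n : zpow s (- Z.of_nat n)%Z = npow (ginv s) n.
Proof.
  destruct n. reflexivity.
  change (- Z.of_nat (S n))%Z with (Zneg (Pos.of_succ_nat n)). unfold zpow.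
  rewrite SuccNat2Pos.id_succ. apply inv_npow.
Qed.

Lemma t_le_e {G : right_lgroup} (s : G) : gle (gone G) s -> gle (ginv s) (gone G).
Proof. intro H. rewrite (le_mulr_iff _ _ s), gmulVl, gmul1l. exact H. Qed.

Lemma tpow_S_lle {G : right_lgroup} (s : G) n : gle (gone G) s ->
  lle (npow (ginv s) (S n)) (npow (ginv s) n).
Proof.
  intro H. rewrite npow_S_r. rewrite <- (gmul1r _ (npow (ginv s) n)) at 2.
  apply lle_mull. apply lle_e_r. apply t_le_e. exact H.
Qed.

Lemma tpow_mono {G : right_lgroup} (s : G) m n : gle (gone G) s -> (m <= n)%nat ->
  lle (npow (ginv s) n) (npow (ginv s) m).
Proof.
  intros H Hmn. induction Hmn. apply lle_refl.
  eapply lle_trans. apply tpow_S_lle; exact H. exact IHHmn.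
Qed.

Definition gi {G : right_lgroup} (s g : G) n := curlyvee g (npow (ginv s) n).

Lemma lle_t_e {G : right_lgroup} (s : G) : gle (gone G) s -> lle (ginv s) (gone G).
Proof. intro H. apply lle_e_r, t_le_e, H. Qed.

Lemma gi_t {G : right_lgroup} (s g : G) j : normal s -> gle (gone G) s ->
  lle (gi s g j · ginv s) (gi s g (S j)).
Proof.
  intros Hs Hp. unfold gi. rewrite vee_mulr_t by exact Hs. apply vee_lub.
  - eapply lle_trans; [|apply vee_l]. rewrite <- (gmul1r _ g) at 2.
    apply lle_mull. apply lle_t_e, Hp.
  - rewrite <- npow_S_r. apply vee_r.
Qed.

Lemma gi_step {G : right_lgroup} (s g : G) j : normal s -> gle (gone G) s ->
  gi s g j = gi s g (S j) -> gi s g (S j) = gi s g (S (S j)).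
Proof.
  intros Hs Hp E. apply lle_antisym.
  - unfold gi at 1. apply vee_lub. apply vee_l.
    eapply lle_trans; [|apply gi_t; auto]. rewrite <- E.
    rewrite npow_S_r. apply lle_mulr_t. exact Hs. apply vee_r.
  - unfold gi. apply vee_mono. apply tpow_S_lle, Hp.
Qed.

Lemma gi_stable {G : right_lgroup} (s g : G) j : normal s -> gle (gone G) s ->
  gi s g j = gi s g (S j) -> forall m, gi s g j = gi s g (j + m).
Proof.
  intros Hs Hp E m.
  assert (gi s g j = gi s g (j + m) /\ gi s g (j + m) = gi s g (S (j + m))) as [H _].
  { induction m. rewrite Nat.add_0_r. auto.
    destruct IHm as [H1 H2]. rewrite <- plus_n_Sm. split.
    rewrite H1; exact H2. apply gi_step; auto. }
  exact H.
Qed.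

Lemma gi_0 {G : right_lgroup} (s g : G) : gle g (gone G) -> gi s g 0 = gone G.
Proof. intro H. unfold gi. simpl. apply vee_eq_r. apply lle_e_r, H. Qed.

Lemma gi_top {G : right_lgroup} (s g : G) k : normal s ->
  gle (npow (ginv s) k) g -> gi s g k = g.
Proof. intros Hs H. unfold gi. apply vee_eq_l. apply tpow_le_lle; auto. Qed.

Definition cf {G : right_lgroup} (s g : G) j := ginv (gi s g j) · gi s g (S j).

Lemma cf_interval {G : right_lgroup} (s g : G) j : normal s -> gle (gone G) s ->
  interval (ginv s) (gone G) (cf s g j).
Proof.
  intros Hs Hp. unfold cf. split.
  - replace (ginv s) with (npow (ginv s) 1) by (simpl; apply gmul1r).
    apply tpow_le_lle. exact Hs.
    apply (proj2 (lle_mull _ _ (gi s g j))). rewrite mulVK. simpl. rewrite gmul1r.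
    apply gi_t; auto.
  - apply lle_e_r. apply (proj2 (lle_mull _ _ (gi s g j))). rewrite mulVK, gmul1r.
    unfold gi. apply vee_mono. apply tpow_S_lle, Hp.
Qed.

Lemma prod_tele {G : right_lgroup} (s g : G) n a :
  prodl (map (fun i => cf s g i) (seq a n)) = ginv (gi s g a) · gi s g (a + n).
Proof.
  revert a. induction n; intro a; simpl.
  rewrite Nat.add_0_r, gmulVl. reflexivity.
  rewrite IHn. unfold cf. rewrite <- gmulA, mulVK, <- plus_n_Sm. reflexivity.
Qed.

Lemma t_le_lle {G : right_lgroup} (s x : G) : normal s ->
  (gle (ginv s) x <-> lle (ginv s) x).
Proof.
  intro Hs. pose proof (tpow_le_lle s x 1 Hs) as H. simpl in H. rewrite gmul1r in H. exact H.
Qed.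

Lemma cf_ln {G : right_lgroup} (s g : G) j h h' : normal s -> gle (gone G) s ->
  negcone h -> negcone h' -> h · h' = cf s g (S j) ->
  interval (ginv s) (gone G) (cf s g j · h) -> h = gone G.
Proof.
  intros Hs Hp Hh Hh' E [I1 _]. unfold cf in E.
  set (a := gi s g j) in *. set (b := gi s g (S j)) in *. set (c := gi s g (S (S j))) in *.
  assert (Ec : b · (h · h') = c) by (rewrite E; apply mulVK).
  apply gle_antisym. exact Hh. apply lle_e_l.
  apply (proj2 (lle_mull _ _ b)). rewrite gmul1r.
  unfold b at 1, gi. apply vee_lub.
  - apply lle_trans with c. apply vee_l.
    rewrite <- Ec, gmulA. rewrite <- (gmul1r _ (b · h)) at 2. apply lle_mull.
    apply lle_e_r. exact Hh'.
  - rewrite npow_S_r. apply lle_trans with (a · ginv s).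
    apply lle_mulr_t. exact Hs. apply vee_r.
    replace (b · h) with (a · (ginv a · b · h)) by (rewrite <- !gmulA, mulVK; reflexivity).
    apply lle_mull. apply t_le_lle; assumption.
Qed.

Definition LN {G : right_lgroup} (s : G) (hs : list G) :=
  forall i, S i < length hs ->
     ~ exists h h' : G, negcone h /\ negcone h' /\ h <> gone G /\
         gmul h h' = nth (S i) hs (gone G) /\
         interval (ginv s) (gone G) (gmul (nth i hs (gone G)) h).

Definition PI {G : right_lgroup} (s : G) (hs : list G) :=
  forall x, In x hs -> interval (ginv s) (gone G) x.

Lemma LN_tail {G : right_lgroup} (s h : G) L : LN s (h :: L) -> LN s L.
Proof. intros H i Hi. apply (H (S i)). simpl. lia. Qed.
Lemma PI_tail {G : right_lgroup} (s h : G) L : PI s (h :: L) -> PI s L.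
Proof. intros H x Hx. apply H. right; exact Hx. Qed.

Lemma PI_neg {G : right_lgroup} (s : G) L : PI s L -> gle (prodl L) (gone G).
Proof. intro H. apply prodl_neg. intros x Hx. apply (H x Hx). Qed.

Lemma lemB {G : right_lgroup} (s : G) (Hs : normal s) (Hp : gle (gone G) s) :
  forall L h, PI s (h :: L) -> LN s (h :: L) -> h = curlyvee (h · prodl L) (ginv s).
Proof.
  induction L as [|h2 L IH]; intros h HP HL.
  - simpl. rewrite gmul1r. symmetry. apply vee_eq_l. apply t_le_lle. exact Hs.
    apply (HP h). left; reflexivity.
  - assert (E2 : h2 = curlyvee (prodl (h2 :: L)) (ginv s)).
    { apply IH. apply PI_tail with h; exact HP. apply LN_tail with h; exact HL. }
    set (y := prodl (h2 :: L)) in *. set (x := h · y).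
    set (c := curlyvee x (ginv s)).
    assert (Hh : interval (ginv s) (gone G) h) by (apply HP; left; reflexivity).
    assert (Hch : lle c h).
    { apply vee_lub.
      - unfold x. rewrite <- (gmul1r _ h) at 2. apply lle_mull. apply lle_e_r.
        apply PI_neg with s. apply PI_tail with h; exact HP.
      - apply t_le_lle. exact Hs. apply Hh. }
    set (hh := ginv h · c).
    destruct (classic (hh = gone G)) as [Ehh|Nhh].
    + unfold hh in Ehh. rewrite <- (mulVK h c), Ehh, gmul1r. reflexivity.
    + exfalso. apply (HL 0). simpl; lia.
      exists hh, (ginv hh · h2). split; [|split; [|split; [|split]]].
      * unfold negcone. apply lle_e_r. apply (proj2 (lle_mull _ _ h)).
        unfold hh. rewrite mulVK, gmul1r. exact Hch.
      * unfold negcone. apply lle_e_r. apply (proj2 (lle_mull _ _ hh)).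
        rewrite mulVK, gmul1r. rewrite E2. apply vee_lub.
        -- apply (proj2 (lle_mull _ _ h)). unfold hh. rewrite mulVK. apply vee_l.
        -- apply (proj2 (lle_mull _ _ h)). unfold hh. rewrite mulVK.
           apply lle_trans with (ginv s). rewrite <- (gmul1l _ (ginv s)) at 2.
           apply lle_mulr_t. exact Hs. apply lle_e_r. apply Hh. apply vee_r.
      * exact Nhh.
      * simpl. apply mulVK.
      * simpl. unfold hh. rewrite mulVK. split.
        apply t_le_lle. exact Hs. apply vee_r.
        apply lle_e_r. apply lle_trans with h. exact Hch. apply lle_e_r, Hh.
Qed.

Lemma lemA {G : right_lgroup} (s : G) (Hs : normal s) (Hp : gle (gone G) s) :
  forall L, PI s L -> LN s L -> forall i, i <= length L ->
    prodl (firstn i L) = curlyvee (prodl L) (npow (ginv s) i).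
Proof.
  induction L as [|h L IH]; intros HP HL i Hi.
  - simpl in Hi. assert (i = 0) by lia. subst. simpl. symmetry. apply vee_eq_l, lle_refl.
  - destruct i as [|i].
    + simpl. symmetry. apply vee_eq_r. apply lle_e_r. apply (PI_neg s (h :: L)). exact HP.
    + simpl firstn. simpl prodl at 1.
      rewrite IH. 2: apply PI_tail with h; exact HP. 2: apply LN_tail with h; exact HL.
      2: simpl in Hi; lia.
      rewrite vee_mull. rewrite (lemB s Hs Hp L h HP HL) at 2.
      rewrite vee_mulr_tpow by exact Hs.
      change (prodl (h :: L)) with (h · prodl L).
      rewrite <- npow_S.
      apply vee_absorb. rewrite <- (gmul1r _ (h · prodl L)) at 2. apply lle_mull.
      apply lle_trans with (npow (ginv s) 0). apply tpow_mono. exact Hp. lia.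
      apply lle_refl.
Qed.

Lemma firstn_S_prod {G : right_lgroup} (L : list G) j : j < length L ->
  prodl (firstn (S j) L) = prodl (firstn j L) · nth j L (gone G).
Proof.
  revert j. induction L as [|h L IH]; intros j Hj. simpl in Hj; lia.
  destruct j as [|j].
  - simpl. rewrite gmul1r, gmul1l. reflexivity.
  - change (prodl (firstn (S (S j)) (h :: L))) with (h · prodl (firstn (S j) L)).
    rewrite IH by (simpl in Hj; lia). simpl. apply gmulA.
Qed.

Lemma exists_bound {G : right_lgroup} (s g : G) : strong_order_unit s ->
  exists n, gle (npow (ginv s) n) g.
Proof.
  intros [Hp [_ [Hs Hbd]]]. destruct (Hbd (ginv g)) as [z Hz].
  assert (Hcase : gle (ginv g) (gone G) -> exists n, gle (npow (ginv s) n) g).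
  { intro H. exists 0. simpl. rewrite (le_mulr_iff _ _ g), gmulVl, gmul1l in H. exact H. }
  destruct z as [|p|p]; simpl in Hz.
  - apply Hcase, Hz.
  - exists (Pos.to_nat p). set (n := Pos.to_nat p) in *.
    rewrite (le_mulr_iff _ _ g), gmulVl in Hz.
    rewrite (tpow_le s _ _ n Hs), <- inv_npow, mulKV, gmul1r in Hz. rewrite <- inv_npow. exact Hz.
  - apply Hcase. eapply gle_trans. exact Hz. rewrite inv_npow.
    apply lle_e_r. apply (tpow_mono s 0 (Pos.to_nat p) Hp). lia.
Qed.

Lemma nth_cf {G : right_lgroup} (s g : G) k j : j < k ->
  nth j (map (cf s g) (seq 0 k)) (gone G) = cf s g j.
Proof.
  intro H. rewrite (@nth_indep _ _ _ _ (cf s g 0)) by (rewrite length_map, length_seq; lia).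
  rewrite map_nth, seq_nth by lia. reflexivity.
Qed.

Theorem mainTheorem2 (G : right_lgroup) (s g : G) :
  strong_order_unit s -> negcone g ->
  exists k : nat,
    (* k = min { i >= 0 : g >= s^{-i} } *)
    gle (zpow s (- Z.of_nat k)%Z) g /\
    (forall i : nat, (i < k)%nat -> ~ gle (zpow s (- Z.of_nat i)%Z) g) /\
    (* the factors h_i = (g ⋎ s^{-(i-1)})^{-1} (g ⋎ s^{-i}), 1 <= i <= k *)
    let hs := map (fun i : nat =>
                gmul (ginv (curlyvee g (zpow s (- Z.of_nat (i - 1))%Z)))
                     (curlyvee g (zpow s (- Z.of_nat i)%Z)))
              (seq 1 k) in
    left_normal_factorization s g hs /\
    (forall hs' : list G, left_normal_factorization s g hs' -> hs' = hs).
Proof.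
  intros Hsou Hg.
  pose proof (exists_bound s g Hsou) as Hex.
  destruct Hsou as [Hp [_ [Hs _]]].
  set (P := fun n => gle (npow (ginv s) n) g).
  destruct (dec_inh_nat_subset_has_unique_least_element P (fun n => classic (P n)) Hex)
    as [k [[Pk Hmin] _]].
  assert (Hmin' : forall i, i < k -> ~ gle (npow (ginv s) i) g).
  { intros i Hi Hc. specialize (Hmin i Hc). lia. }
  exists k. rewrite !zpow_neg. split. exact Pk. split.
  { intros i Hi. rewrite zpow_neg. apply Hmin'; exact Hi. }
  assert (Ehs : map (fun i : nat =>
                gmul (ginv (curlyvee g (zpow s (- Z.of_nat (i - 1))%Z)))
                     (curlyvee g (zpow s (- Z.of_nat i)%Z)))
              (seq 1 k) = map (cf s g) (seq 0 k)).
  { rewrite <- seq_shift, map_map. apply map_ext. intro j.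
    rewrite !zpow_neg. simpl (S j - 1). rewrite Nat.sub_0_r. reflexivity. }
  cbv zeta. rewrite Ehs. clear Ehs.
  assert (Hgk : gi s g k = g) by (apply gi_top; assumption).
  assert (Hnz : forall j, j < k -> cf s g j <> gone G).
  { intros j Hj E. unfold cf in E.
    assert (E2 : gi s g j = gi s g (S j)).
    { rewrite <- (mulVK (gi s g j) (gi s g (S j))), E, gmul1r. reflexivity. }
    pose proof (gi_stable s g j Hs Hp E2 (k - j)) as E3.
    replace (j + (k - j)) with k in E3 by lia. rewrite Hgk in E3.
    apply (Hmin' j Hj). apply tpow_le_lle. exact Hs. rewrite <- E3. apply vee_r. }
  split.
  - split; [|split; [|split]].
    + intros h Hh. apply in_map_iff in Hh. destruct Hh as [j [<- _]].
      apply cf_interval; assumption.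
    + rewrite prod_tele. simpl. rewrite gi_0 by exact Hg. rewrite inv_one, gmul1l.
      symmetry; exact Hgk.
    + intros h Hh. apply in_map_iff in Hh. destruct Hh as [j [<- Hj]].
      apply in_seq in Hj. apply Hnz. lia.
    + intros i Hi [h [h' [Hh [Hh' [Hne [E I]]]]]].
      rewrite length_map, length_seq in Hi.
      rewrite nth_cf in E by lia. rewrite nth_cf in I by lia.
      apply Hne. eapply cf_ln; eauto.
  - intros hs' [HP [Hprod [Hne' HL]]].
    set (m := length hs').
    assert (HA := lemA s Hs Hp hs' HP HL). rewrite <- Hprod in HA.
    assert (Hn : forall j, j < m -> nth j hs' (gone G) = cf s g j).
    { intros j Hj. pose proof (firstn_S_prod hs' j Hj) as F.
      rewrite !HA in F by lia. fold (gi s g j) (gi s g (S j)) in F.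
      unfold cf. rewrite F, mulKV. reflexivity. }
    assert (Hkm : k <= m).
    { destruct (Nat.lt_ge_cases m k) as [Hlt|]; [|assumption]. exfalso.
      apply (Hmin' m Hlt). pose proof (HA m (le_n m)) as F.
      unfold m in F at 1. rewrite firstn_all, <- Hprod in F.
      apply tpow_le_lle. exact Hs. rewrite F. apply vee_r. }
    assert (Hmk : m <= k).
    { destruct (Nat.lt_ge_cases k m) as [Hlt|]; [|assumption]. exfalso.
      apply (Hne' (nth k hs' (gone G))). apply nth_In. exact Hlt.
      rewrite Hn by exact Hlt. unfold cf. rewrite Hgk, gi_top. apply gmulVl. exact Hs.
      apply tpow_le_lle. exact Hs. eapply lle_trans. apply tpow_S_lle, Hp.
      apply tpow_le_lle; assumption. }
    apply nth_ext with (gone G) (gone G).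
    + rewrite length_map, length_seq. fold m. lia.
    + intros n Hn'. fold m in Hn'. rewrite Hn by exact Hn'. rewrite nth_cf by lia. reflexivity.
Qed.
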